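(* Let $n>2$ be an even integer, $a\in\mathbb{R}$, $b\in\{1,-1\}$, and for $c\in\mathbb{R}$ let $\lambda_{\min}(c)$, $\lambda_{\max}(c)$ be the smallest and largest eigenvalues of the $(n+1)\times(n+1)$ symmetric matrix $m_n(a,b,c)$ (rows/columns indexed $0,\dots,n$, $(0,0)$-entry $-nc$, $(0,j)$- and $(j,0)$-entries $b$ for $j=1,\dots,n$, lower-right block the circulant $\mathrm{circ}(c,a,0,\dots,0,a)$). Define \[c_{\mathrm{upp}}=-\frac{(n-1)+2a}{n+1},\ \lambda_{\mathrm{upp}}=\frac{2n(a-1)}{n+1},\qquad c_{\mathrm{low}}=\frac{(n-1)-2a}{n+1},\ \lambda_{\mathrm{low}}=\frac{2n(a+1)}{n+1},\] and, for $a\ne0$, $c_{\mathrm{trans}}=\dfrac{8a^2-n}{4(n+1)a}$, $\lambda_{\mathrm{trans}}=-\dfrac{n(8a^2+1)}{4(n+1)a}$. Then $\min_{c\in\mathbb{R}}\lambda_{\max}(c)$ is attained at $(c,\lambda)=(c_{\mathrm{trans}},\lambda_{\mathrm{trans}})$ if $a\le-1/4$ and at $(c_{\mathrm{low}},\lambda_{\mathrm{low}})$ if $a>-1/4$; and $\max_{c\in\mathbb{R}}\lambda_{\min}(c)$ is attained at $(c_{\mathrm{trans}},\lambda_{\mathrm{trans}})$ if $a\ge1/4$ and at $(c_{\mathrm{upp}},\lambda_{\mathrm{upp}})$ if $a<1/4$. Moreover, whenever such an extremum is attained at the transition point $(c_{\mathrm{trans}},\lambda_{\mathrm{trans}})$,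 the corresponding eigenvalue of $m_n(a,b,c_{\mathrm{trans}})$ is double, and otherwise it is single. *)

(* Defs.v *)
From HB Require Import structures.
From mathcomp Require Import all_boot all_order all_algebra.
From mathcomp Require Import all_reals.
Set Implicit Arguments. Unset Strict Implicit. Unset Printing Implicit Defensive.
Import Order.TTheory GRing.Theory Num.Theory.
Local Open Scope ring_scope.

Definition mn {R : realType} (n : nat) (a b c : R) : 'M[R]_n.+1 :=
  \matrix_(i, j)
    if (i == 0 :> nat) && (j == 0 :> nat) then - (n%:R * c)
    else if (i == 0 :> nat) || (j == 0 :> nat) then b
    else if i == j then c
    else if (i.+1 == j %[mod n]) || (j.+1 == i %[mod n]) then a
    else 0.

Definition is_lmax {R : realType} (m : nat) (A : 'M[R]_m) (l : R) : Prop :=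
  eigenvalue A l /\ forall mu, eigenvalue A mu -> mu <= l.
Definition is_lmin {R : realType} (m : nat) (A : 'M[R]_m) (l : R) : Prop :=
  eigenvalue A l /\ forall mu, eigenvalue A mu -> l <= mu.

Definition minlmax_at {R : realType} (n : nat) (a b c0 l0 : R) : Prop :=
  is_lmax (mn n a b c0) l0 /\
  forall c l, is_lmax (mn n a b c) l -> l0 <= l.
Definition maxlmin_at {R : realType} (n : nat) (a b c0 l0 : R) : Prop :=
  is_lmin (mn n a b c0) l0 /\
  forall c l, is_lmin (mn n a b c) l -> l <= l0.

Definition eig_mult {R : realType} (m : nat) (A : 'M[R]_m) (l : R) : nat :=
  mup l (char_poly A).

Definition c_upp {R : realType} (n : nat) (a : R) : R := - ((n%:R - 1) + 2 * a) / (n%:R + 1).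
Definition l_upp {R : realType} (n : nat) (a : R) : R := 2 * n%:R * (a - 1) / (n%:R + 1).
Definition c_low {R : realType} (n : nat) (a : R) : R := ((n%:R - 1) - 2 * a) / (n%:R + 1).
Definition l_low {R : realType} (n : nat) (a : R) : R := 2 * n%:R * (a + 1) / (n%:R + 1).
Definition c_trans {R : realType} (n : nat) (a : R) : R :=
  (8 * a ^+ 2 - n%:R) / (4 * (n%:R + 1) * a).
Definition l_trans {R : realType} (n : nat) (a : R) : R :=
  - (n%:R * (8 * a ^+ 2 + 1) / (4 * (n%:R + 1) * a)).

(* Main.v *)
Require Import Defs.
From HB Require Import structures.
From mathcomp Require Import all_boot all_order all_algebra.
From mathcomp Require Import all_reals.
From mathcomp Require Import ring lra zify.
Import Order.TTheory GRing.Theory Num.Theory.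
Local Open Scope ring_scope.

Lemma det2 (R : comNzRingType) (A : 'M[R]_2) : \det A = A 0 0 * A 1 1 - A 0 1 * A 1 0.
Proof.
rewrite (expand_det_row _ 0) !big_ord_recl big_ord0 /cofactor !det_mx11 !mxE /=.
rewrite addr0 expr0 expr1 !mul1r mulN1r mulrN.
by congr (_ * _ - _ * _); congr (A _ _); apply/val_inj.
Qed.

Lemma det3 (R : comNzRingType) (A : 'M[R]_3) : \det A =
  A 0 0 * (A 1 1 * A 2 2 - A 1 2 * A 2 1)
  - A 0 1 * (A 1 0 * A 2 2 - A 1 2 * A 2 0)
  + A 0 2 * (A 1 0 * A 2 1 - A 1 1 * A 2 0).
Proof.
rewrite (expand_det_row _ 0) !big_ord_recl big_ord0 /cofactor !det2 !mxE /=.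
rewrite addr0 expr0 expr1 !mul1r mulN1r.
pose f := fun i j : nat => A (inord i) (inord j).
have H : forall i j, A i j = f i j by move=> i j; rewrite /f !inord_val.
rewrite !H /=. ring.
Qed.


Lemma char_poly_tr (R : comNzRingType) n (B : 'M[R]_n) : char_poly B^T = char_poly B.
Proof.
rewrite /char_poly -det_tr; congr (\det _).
by rewrite /char_poly_mx linearB /= tr_scalar_mx -map_trmx trmxK.
Qed.

Lemma char_block_lower (R : comNzRingType) m n (A : 'M[R]_m) (C : 'M[R]_(n, m))
  (B : 'M[R]_n) : char_poly (block_mx A 0 C B) = char_poly A * char_poly B.
Proof.
rewrite /char_poly /char_poly_mx map_block_mx map_mx0 scalar_mx_block.
by rewrite opp_block_mx add_block_mx oppr0 addr0 det_lblock.
Qed.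

Lemma char_conj (F : fieldType) n (P M D : 'M[F]_n) : P \in unitmx ->
  D *m P = P *m M -> char_poly D = char_poly M.
Proof.
move=> Pu DP.
pose Pp := map_mx polyC P.
have E : char_poly_mx D *m Pp = Pp *m char_poly_mx M.
  rewrite /char_poly_mx mulmxBl mulmxBr -scalar_mxC /Pp -!map_mxM DP.
  by [].
have := congr1 determinant E; rewrite !det_mulmx [_ * \det (char_poly_mx M)]mulrC.
apply: mulIf; rewrite /Pp det_map_mx polyC_eq0 -unitfE -unitmxE //.
Qed.

Lemma block_struct (F : fieldType) k (M : 'M[F]_(3 + k)) (U : 'M[F]_(3, 3 + k))
  (A3 : 'M[F]_3) :
  lsubmx U = 1%:M -> U *m M = A3 *m U ->
  exists B : 'M[F]_k, char_poly M = char_poly A3 * char_poly B /\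
    forall l, root (char_poly B) l ->
      exists2 u : 'cV[F]_(3 + k), u != 0 & U *m u = 0 /\ M *m u = l *: u.
Proof.
move=> HU HUM.
pose P : 'M[F]_(3 + k) := col_mx U (row_mx 0 1%:M).
have PE : P = block_mx 1%:M (rsubmx U) 0 1%:M by rewrite /P -{1}(hsubmxK U) HU.
have Pu : P \in unitmx by rewrite unitmxE PE det_ublock !det1 mulr1 unitr1.
pose D := P *m M *m invmx P.
have uD : usubmx D = row_mx A3 0.
  rewrite /D -!mul_usub_mx /P col_mxKu HUM -!mulmxA.
  have -> : U *m invmx P = row_mx 1%:M 0.
    rewrite -[U](col_mxKu U (row_mx 0 1%:M)) mul_usub_mx -/P mulmxV //.
    by rewrite (scalar_mx_block 3 k) col_mxKu.
  by rewrite mul_mx_row mulmx1 mulmx0.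
have DE : D = block_mx A3 0 (dlsubmx D) (drsubmx D).
  by rewrite -[D in LHS]submxK /ulsubmx /ursubmx uD row_mxKl row_mxKr.
have DP : D *m P = P *m M by rewrite /D mulmxKV.
have charE : char_poly M = char_poly D by rewrite (@char_conj _ _ _ _ _ Pu DP).
exists (drsubmx D); split.
  by rewrite charE {1}DE char_block_lower.
move=> l Hl.
have : eigenvalue (drsubmx D)^T l by rewrite eigenvalue_root_char char_poly_tr.
case/eigenvalueP => y Hy y0.
pose z := y^T.
have Bz : drsubmx D *m z = l *: z.
  by rewrite /z -[drsubmx D]trmxK -trmx_mul Hy linearZ.
have iPD : invmx P *m D = M *m invmx P by rewrite /D !mulmxA mulVmx // mul1mx.
exists (invmx P *m col_mx 0 z).
  apply: contraNneq y0 => H.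
  have : P *m (invmx P *m col_mx 0 z) = 0 by rewrite H mulmx0.
  rewrite mulmxA mulmxV // mul1mx => /eqP; rewrite col_mx_eq0 => /andP[_ /eqP zz].
  by rewrite -[y]trmxK -/z zz trmx0.
split.
  have -> : U = usubmx P by rewrite /P col_mxKu.
  by rewrite mul_usub_mx mulmxA mulmxV // mul1mx col_mxKu.
rewrite mulmxA -iPD -mulmxA scalemxAr; congr (_ *m _).
by rewrite {1}DE mul_block_col !mulmx0 mul0mx !add0r Bz scale_col_mx scaler0.

Qed.


Lemma val_ordS n (k : 'I_n) : (ordS k : nat) = if k.+1 == n then 0%N else k.+1.
Proof.
rewrite /=; case: eqP => [->|ne]; first by rewrite modnn.
rewrite modn_small //; have := ltn_ord k; lia.
Qed.

Lemma ordS_neq n (k : 'I_n) : (1 < n)%N -> ordS k != k.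
Proof.
move=> n1; apply/eqP => /(congr1 (@nat_of_ord n)); rewrite val_ordS.
have := ltn_ord k; case: eqP => /=; lia.
Qed.

Lemma ordSS_neq n (k l : 'I_n) : (2 < n)%N -> l = ordS k -> k = ordS l -> False.
Proof.
move=> n2 /(congr1 (@nat_of_ord n)) e1 /(congr1 (@nat_of_ord n)) e2; move: e1 e2.
rewrite !val_ordS; have := ltn_ord k; have := ltn_ord l.
case: eqP; case: eqP; lia.
Qed.

Lemma odd_ordS n (k : 'I_n) : ~~ odd n -> odd (ordS k) = ~~ odd k.
Proof.
move=> ev; rewrite val_ordS; case: eqP => [e|_] //=.
have : odd k.+1 = odd n by rewrite e.
by move=> /= ; case: (odd k) => //=; rewrite (negPf ev).
Qed.

Lemma odd_ord_pred n (k : 'I_n) : ~~ odd n -> odd (ord_pred k) = ~~ odd k.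
Proof. by move=> ev; rewrite -{2}(ord_predK k) odd_ordS // negbK. Qed.

Lemma modS_eq n (k l : 'I_n) : (k.+2 == l.+1 %[mod n]) = (l == ordS k).
Proof.
rewrite -[k.+2]addn1 -[l.+1]addn1 eqn_modDr (modn_small (ltn_ord l)).
by rewrite -val_eqE /= eq_sym.
Qed.

Lemma mn00 (R : realType) n (a b c : R) : mn n a b c ord0 ord0 = - (n%:R * c).
Proof. by rewrite mxE. Qed.

Lemma mn0l (R : realType) n (a b c : R) (j : 'I_n) : mn n a b c ord0 (lift ord0 j) = b.
Proof. by rewrite mxE lift0. Qed.

Lemma mnl0 (R : realType) n (a b c : R) (j : 'I_n) : mn n a b c (lift ord0 j) ord0 = b.
Proof. by rewrite mxE lift0. Qed.

Lemma mnll (R : realType) n (a b c : R) (k l : 'I_n) : (2 < n)%N ->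
  mn n a b c (lift ord0 k) (lift ord0 l) =
  c * (k == l)%:R + a * (l == ordS k)%:R + a * (k == ordS l)%:R.
Proof.
move=> n2; rewrite mxE !lift0 /= (inj_eq lift_inj) !modS_eq.
case: (k =P l) => [<-|kl].
  by rewrite eq_sym (negPf (@ordS_neq n k (ltnW n2))) /=; ring.
case: (l =P ordS k) => [e|ne] /=.
  case: (k =P ordS l) => [e2|_]; first by case: (@ordSS_neq n k l n2 e e2).
  by rewrite /=; ring.
case: (k =P ordS l) => [e2|_] /=; ring.
Qed.


Lemma sum_delta (R : nzRingType) n (F : 'I_n -> R) i :
  \sum_(l < n) F l * (l == i)%:R = F i.
Proof.
rewrite (bigD1 i) //= eqxx mulr1 big1 ?addr0 // => l /negPf ->.
by rewrite mulr0.
Qed.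

Lemma eqS_pred n (j l : 'I_n) : (j == ordS l) = (l == ord_pred j).
Proof. by rewrite -{1}(ord_predK j) (inj_eq (@ordS_inj n)) eq_sym. Qed.

Lemma mn_sumr (R : realType) n (a b c : R) (x : 'I_n -> R) (j : 'I_n) : (2 < n)%N ->
  \sum_(l < n) x l * mn n a b c (lift ord0 l) (lift ord0 j) =
  c * x j + a * x (ord_pred j) + a * x (ordS j).
Proof.
move=> n2.
transitivity (\sum_(l < n) (c * x l) * (l == j)%:R +
  \sum_(l < n) (a * x l) * (l == ord_pred j)%:R +
  \sum_(l < n) (a * x l) * (l == ordS j)%:R); last by rewrite !sum_delta.
rewrite -!big_split /=; apply: eq_bigr => l _; rewrite mnll // eqS_pred; ring.
Qed.

Lemma sum_odd_nat m : (\sum_(0 <= l < m.*2) (odd l : nat) = m)%N.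
Proof.
elim: m => [|m IH]; first by rewrite big_geq.
by rewrite doubleS !big_nat_recr //= IH odd_double addn0 addn1.
Qed.

Lemma sum_even_nat m : (\sum_(0 <= l < m.*2) (~~ odd l : nat) = m)%N.
Proof.
elim: m => [|m IH]; first by rewrite big_geq.
by rewrite doubleS !big_nat_recr //= IH odd_double addn0 addn1.
Qed.

Lemma sum_oddR (R : nzRingType) n : ~~ odd n ->
  \sum_(l < n) ((odd l)%:R : R) = (n./2)%:R.
Proof.
move=> ev; rewrite -natr_sum; congr (_ %:R).
rewrite -(big_mkord xpredT (fun l => (odd l : nat))).
by rewrite -{1}(odd_double_half n) (negPf ev) add0n sum_odd_nat.
Qed.

Lemma sum_evenR (R : nzRingType) n : ~~ odd n ->
  \sum_(l < n) ((~~ odd l)%:R : R) = (n./2)%:R.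
Proof.
move=> ev; rewrite -natr_sum; congr (_ %:R).
rewrite -(big_mkord xpredT (fun l => (~~ odd l : nat))).
by rewrite -{1}(odd_double_half n) (negPf ev) add0n sum_even_nat.
Qed.

Definition Umx (R : realType) n : 'M[R]_(3, n.+1) := \matrix_(i < 3, j < n.+1)
  (if (i == 0 :> nat) then (j == 0 :> nat)%:R
   else if (i == 1 :> nat) then (odd j)%:R else ((j != 0 :> nat) && ~~ odd j)%:R).

Definition A3mx {R : realType} n (a b c : R) : 'M[R]_3 := \matrix_(i < 3, j < 3)
  (if (i == 0 :> nat) then (if (j == 0 :> nat) then - (n%:R * c) else b)
   else if (j == 0 :> nat) then (n./2)%:R * b
   else if (i == j :> nat) then c else 2 * a).

Lemma UmxE (R : realType) n (i : 'I_3) (j : 'I_n.+1) : Umx R n i j =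
  (if (i == 0 :> nat) then (j == 0 :> nat)%:R
   else if (i == 1 :> nat) then (odd j)%:R else ((j != 0 :> nat) && ~~ odd j)%:R).
Proof. by rewrite mxE. Qed.

Lemma A3E (R : realType) n (a b c : R) (i j : 'I_3) : A3mx n a b c i j =
  (if (i == 0 :> nat) then (if (j == 0 :> nat) then - (n%:R * c) else b)
   else if (j == 0 :> nat) then (n./2)%:R * b
   else if (i == j :> nat) then c else 2 * a).
Proof. by rewrite mxE. Qed.

Lemma U_M (R : realType) n (a b c : R) : (2 < n)%N -> ~~ odd n ->
  Umx R n *m mn n a b c = A3mx n a b c *m Umx R n.
Proof.
move=> n2 ev; apply/matrixP => i j.
have UL : forall (i : 'I_3) (l : 'I_n), Umx R n i (lift ord0 l) =
   if (i == 0 :> nat) then 0 else if (i == 1 :> nat) then (~~ odd l)%:R else (odd l)%:R.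
  by move=> i0 l; rewrite UmxE lift0 /= negbK.
have U0 : forall (i : 'I_3), Umx R n i ord0 = (i == 0 :> nat)%:R.
  by move=> i0; rewrite UmxE /=; case: ifP => //; case: ifP.
rewrite [LHS]mxE big_ord_recl U0.
under eq_bigr => l _ do rewrite UL.
rewrite [RHS]mxE !big_ord_recl big_ord0 !A3E !UmxE /=.
case: (unliftP ord0 j) => [j'|] -> ; rewrite ?lift0 /=.
  rewrite mn0l; case: i => [[|[|[|i]]] Hi] //=.
  + rewrite big1 => [|l _]; last by rewrite mul0r.
    by case: (odd j') => /=; ring.
  + rewrite (@mn_sumr _ _ a b c (fun l => (~~ odd l)%:R)) // odd_ordS // odd_ord_pred //.
    by case: (odd j') => /=; ring.
  + rewrite (@mn_sumr _ _ a b c (fun l => (odd l)%:R)) // odd_ordS // odd_ord_pred //.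
    by case: (odd j') => /=; ring.
- under eq_bigr => l _ do rewrite mnl0.
  rewrite mn00 -big_distrl /=; case: i => [[|[|[|i]]] Hi] //=.
  + rewrite big1 => [|l _] //; ring.
  + rewrite sum_evenR //; ring.
  + rewrite sum_oddR //; ring.
Qed.


Lemma charA3 (R : realType) n (a b c : R) : ~~ odd n ->
  char_poly (A3mx n a b c) = ('X - (c - 2 * a)%:P) *
    (('X + (n%:R * c)%:P) * ('X - (c + 2 * a)%:P) - (n%:R * b ^+ 2)%:P).
Proof.
move=> ev.
have nE : (n%:R : R) = 2 * (n./2)%:R.
  by rewrite -{1}(odd_double_half n) (negPf ev) add0n -muln2 natrM mulrC.
rewrite /char_poly det3 !mxE /= nE.
rewrite !mulr1n !mulr0n !(polyCN, polyCM, polyCD, polyCB, polyC_exp, polyC_natr).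
ring.
Qed.

Lemma mn_sym (R : realType) n (a b c : R) i j : mn n a b c i j = mn n a b c j i.
Proof.
rewrite !mxE; case: (i == 0 :> nat); case: (j == 0 :> nat) => //=.
by rewrite eq_sym orbC.
Qed.

Lemma W_eig (R : realType) n (a b c l : R) (u : 'cV[R]_n.+1) : (2 < n)%N -> ~~ odd n ->
  u != 0 -> Umx R n *m u = 0 -> mn n a b c *m u = l *: u ->
  `|l - c| <= 2 * `|a| /\ (a != 0 -> l != c - 2 * a).
Proof.
move=> n2 ev u_neq0 Uu Mu.
pose v (k : 'I_n) : R := u (lift ord0 k) 0.
have u0 : u ord0 0 = 0.
  have := congr1 (fun A : 'M[R]_(3, 1) => A ord0 0) Uu; rewrite !mxE big_ord_recl UmxE /= mul1r.
  rewrite big1 ?addr0 // => k _; rewrite UmxE lift0 /= mul0r //.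
have sev : \sum_(k < n) (~~ odd k)%:R * v k = 0.
  have := congr1 (fun A : 'M[R]_(3, 1) => A 1 0) Uu; rewrite !mxE big_ord_recl UmxE /= mul0r add0r.
  by move=> E; rewrite -[RHS]E; apply: eq_bigr => k _; rewrite UmxE lift0.
have eqk : forall k, c * v k + a * v (ord_pred k) + a * v (ordS k) = l * v k.
  move=> k; have := congr1 (fun A : 'M[R]_(n.+1, 1) => A (lift ord0 k) 0) Mu.
  rewrite !mxE big_ord_recl u0 mulr0 add0r => E.
  rewrite -(@mn_sumr _ _ a b c v) // -[RHS]E; apply: eq_bigr => j _.
  by rewrite mulrC mn_sym.
pose V := \sum_(k < n) v k ^+ 2.
pose S1 := \sum_(k < n) v k * v (ordS k).
have VS : \sum_(k < n) v (ordS k) ^+ 2 = V.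
  by rewrite /V [RHS](reindex_inj (@ordS_inj n)).
have H1 : c * V + 2 * a * S1 = l * V.
  have : \sum_(k < n) v k * (c * v k + a * v (ord_pred k) + a * v (ordS k)) =
         \sum_(k < n) v k * (l * v k) by apply: eq_bigr => k _; rewrite eqk.
  have P1 : \sum_(k < n) v k * v (ord_pred k) = S1.
    rewrite /S1 (reindex_inj (@ordS_inj n)) /=; apply: eq_bigr => k _.
    by rewrite ordSK mulrC.
  have L : \sum_(k < n) v k * (c * v k + a * v (ord_pred k) + a * v (ordS k)) =
     c * V + a * S1 + a * S1.
    rewrite -{2}P1 /V /S1 !mulr_sumr -!big_split /=; apply: eq_bigr => k _; ring.
  have Rr : \sum_(k < n) v k * (l * v k) = l * V.
    by rewrite /V mulr_sumr; apply: eq_bigr => k _; ring.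
  by rewrite L Rr => <-; ring.
have S2p : 2 * V + 2 * S1 = \sum_(k < n) (v k + v (ordS k)) ^+ 2.
  rewrite (_ : 2 * V = V + V); last by ring.
  rewrite -{2}VS /V /S1 !mulr_sumr -!big_split /=; apply: eq_bigr => k _; ring.
have H2 : 0 <= 2 * V + 2 * S1.
  have -> : 2 * V + 2 * S1 = \sum_(k < n) (v k + v (ordS k)) ^+ 2.
    rewrite (_ : 2 * V = V + V); last by ring.
    rewrite -{2}VS /V /S1 !mulr_sumr -!big_split /=; apply: eq_bigr => k _; ring.
  by apply: sumr_ge0 => k _; apply: sqr_ge0.
have H3 : 0 <= 2 * V - 2 * S1.
  have -> : 2 * V - 2 * S1 = \sum_(k < n) (v k - v (ordS k)) ^+ 2.
    rewrite (_ : 2 * V = V + V); last by ring.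
    rewrite -{2}VS /V /S1 !mulr_sumr -sumrN -!big_split /=; apply: eq_bigr => k _; ring.
  by apply: sumr_ge0 => k _; apply: sqr_ge0.
have Vge0 : 0 <= V by apply: sumr_ge0 => k _; apply: sqr_ge0.
have Vpos : 0 < V.
  rewrite lt_def Vge0 andbT; apply/negP => /eqP V0.
  have allv : forall k, v k = 0.
    move=> k; have := @psumr_eq0P _ _ _ _ (fun i _ => sqr_ge0 (v i)) V0 k isT.
    by move/eqP; rewrite sqrf_eq0 => /eqP.
  move/negP: u_neq0; apply; apply/eqP/matrixP => i j; rewrite ord1 mxE.
  by case: (unliftP ord0 i) => [k|] ->; [apply: allv | apply: u0].
have E : (l - c) * V = 2 * a * S1 by rewrite mulrBl -H1; ring.
split.
  have HS : `|S1| <= V by rewrite ler_norml; apply/andP; split; lra.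
  rewrite -(ler_pM2r Vpos).
  have -> : `|l - c| * V = `|(l - c) * V| by rewrite normrM (gtr0_norm Vpos).
  rewrite E !normrM.
  rewrite (ger0_norm (ler0n _ 2)); apply: ler_wpM2l => //.
  by rewrite mulr_ge0.
move=> a0; apply/eqP => le.
have S1V : S1 = - V.
  apply: (mulfI (_ : 2 * a != 0)); first by rewrite mulf_neq0 // pnatr_eq0.
  by rewrite -E le; ring.
have alt0 : forall k, v (ordS k) = - v k.
  have Z : \sum_(k < n) (v k + v (ordS k)) ^+ 2 = 0 by rewrite -S2p S1V; ring.
  move=> k; have := @psumr_eq0P _ _ _ _ (fun i _ => sqr_ge0 (v i + v (ordS i))) Z k isT.
  by move/eqP; rewrite sqrf_eq0 addr_eq0 => /eqP ->; rewrite opprK.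
have n0 : (0 < n)%N by apply: ltn_trans n2.
pose v0 := v (Ordinal n0).
have alt : forall m (Hm : (m < n)%N), v (Ordinal Hm) = (-1) ^+ m * v0.
  elim=> [|m IH] Hm; first by rewrite expr0 mul1r /v0; congr (v _); apply: val_inj.
  have -> : Ordinal Hm = ordS (Ordinal (ltnW Hm)).
    by apply: val_inj => /=; rewrite modn_small.
  by rewrite alt0 IH exprS; ring.
have v00 : v0 = 0.
  have : \sum_(k < n) (~~ odd k)%:R * v k = (n./2)%:R * v0.
    rewrite -sum_evenR // mulr_suml; apply: eq_bigr => k _.
    rewrite (_ : k = Ordinal (ltn_ord k)); last by apply: val_inj.
    rewrite alt -signr_odd; case: (odd k) => /=; ring.
  rewrite sev => /esym /eqP; rewrite mulf_eq0 pnatr_eq0 => /orP[|/eqP //].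
  move=> h0; move: n2; rewrite -(odd_double_half n) (negPf ev) add0n (eqP h0) //.
have : V = 0.
  rewrite /V big1 // => k _; rewrite (_ : k = Ordinal (ltn_ord k)); last by apply: val_inj.
  by rewrite alt v00 mulr0 expr0n.
by move=> V0; move: Vpos; rewrite V0 ltxx.
Qed.


Definition qpolm {R : realType} n (a b c : R) : {poly R} :=
  ('X + (n%:R * c)%:P) * ('X - (c + 2 * a)%:P) - (n%:R * b ^+ 2)%:P.

Lemma U_l (R : realType) k : lsubmx (Umx R k.+3 : 'M_(3, 3 + k.+1)) = 1%:M.
Proof.
apply/matrixP => i j; rewrite mxE UmxE mxE /=.
by case: i => [[|[|[|i]]] Hi]; case: j => [[|[|[|j]]] Hj].
Qed.

Lemma mn_struct (R : realType) n (a b c : R) : (2 < n)%N -> ~~ odd n ->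
  exists r : {poly R}, r \is monic /\
   char_poly (mn n a b c) = ('X - (c - 2 * a)%:P) * qpolm n a b c * r /\
   forall l, root r l -> `|l - c| <= 2 * `|a| /\ (a != 0 -> l != c - 2 * a).
Proof.
case: n => [|[|[|k]]] // n2 ev.
have [B [chE Broot]] := @block_struct R (k.+1) (mn k.+3 a b c) (Umx R k.+3)
   (A3mx k.+3 a b c) (U_l R k) (@U_M R _ a b c n2 ev).
exists (char_poly B); split; first exact: char_poly_monic.
split; first by rewrite chE charA3.
move=> l /Broot [u u0 [Uu Mu]].
exact: (@W_eig R _ a b c l u n2 ev u0 Uu Mu).
Qed.


Lemma qpolm_hor (R : realType) n (a b c x : R) :
  (qpolm n a b c).[x] = (x + n%:R * c) * (x - (c + 2 * a)) - n%:R * b ^+ 2.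
Proof. by rewrite /qpolm !hornerE. Qed.

Lemma qpolm_fact (R : realType) n (a b c l : R) :
  qpolm n a b c = ('X - l%:P) * ('X - (- (n%:R * c - c - 2 * a) - l)%:P)
                  + ((qpolm n a b c).[l])%:P.
Proof.
rewrite qpolm_hor /qpolm !(polyCN, polyCM, polyCD, polyCB, polyC_exp, polyC_natr).
ring.
Qed.

Lemma mup_XsubC1 (R : realType) (x y : R) : mup x ('X - y%:P) = (y == x).
Proof. by have := @mup_XsubCX R 1 x y; rewrite expr1 => ->; case: (y == x). Qed.

Lemma spec (R : realType) n (a b c : R) : (2 < n)%N -> ~~ odd n -> b ^+ 2 = 1 ->
  exists r : {poly R},
   (forall mu, eigenvalue (mn n a b c) mu <->
      (mu = c - 2 * a \/ (mu + n%:R * c) * (mu - c - 2 * a) = n%:R \/ root r mu)) /\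
   (forall mu, root r mu -> `|mu - c| <= 2 * `|a| /\ (a != 0 -> mu != c - 2 * a)) /\
   (forall l, (l + n%:R * c) * (l - c - 2 * a) = n%:R ->
      eig_mult (mn n a b c) l = ((c - 2 * a == l)%R + 1 + mup l r)%N).
Proof.
move=> n2 ev b2.
have [r [rm [chE rP]]] := @mn_struct R n a b c n2 ev.
have nR : (0 : R) < n%:R by rewrite ltr0n; apply: ltn_trans n2.
have qE : forall x, (qpolm n a b c).[x] = (x + n%:R * c) * (x - c - 2 * a) - n%:R.
  by move=> x; rewrite qpolm_hor b2 mulr1 opprD addrA.
have qn0 : qpolm n a b c != 0.
  apply/negP => /eqP q0; have := qE (- (n%:R * c)); rewrite q0 horner0.
  rewrite addNr mul0r add0r => /eqP; rewrite eq_sym oppr_eq0 => /eqP h.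
  by move: nR; rewrite h ltxx.
exists r; split.
  move=> mu; rewrite eigenvalue_root_char chE !rootM root_XsubC rootE qE subr_eq0.
  split.
    by case/orP => [/orP [/eqP -> | /eqP ->] | ->]; [left | right; left | right; right].
  by case=> [-> | [-> | ->]]; rewrite ?eqxx ?orbT.
split => // l ql.
rewrite /eig_mult chE mupM ?mulf_neq0 ?polyXsubC_eq0 ?qn0 ?(monic_neq0 rm) //.
rewrite mupM ?polyXsubC_eq0 // mup_XsubC1.
have ql0 : (qpolm n a b c).[l] = 0 by rewrite qE ql subrr.
rewrite (@qpolm_fact R n a b c l) ql0 addr0 mupM ?polyXsubC_eq0 // !mup_XsubC1 eqxx.
set l' := (- _ - l).
have -> : (l' == l) = false.
  apply/negP => /eqP e.
  have : (l + n%:R * c) * (l - c - 2 * a) = - (l - c - 2 * a) ^+ 2.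
    have -> : l + n%:R * c = - (l - c - 2 * a) by rewrite -{1}e /l'; ring.
    by rewrite mulNr expr2.
  rewrite ql => h.
  by move: nR; rewrite h oppr_gt0 ltNge sqr_ge0.
by rewrite addn0.
Qed.

Lemma quad_root_ge (R : realType) (A B K L : R) : (L + A) * (L - B) - K <= 0 ->
  exists mu, (mu + A) * (mu - B) = K /\ L <= mu.
Proof.
move=> hL.
pose p := A - B; pose r0 := - (A * B) - K.
pose D := p ^+ 2 - 4 * r0.
have DE : D = (2 * L + A - B) ^+ 2 - 4 * ((L + A) * (L - B) - K) by rewrite /D /p /r0; ring.
have D0 : 0 <= D by rewrite DE; have := sqr_ge0 (2 * L + A - B); lra.
pose s := Num.sqrt D.
have s0 : 0 <= s := sqrtr_ge0 D.
have ss : s ^+ 2 = D by rewrite sqr_sqrtr.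
exists ((- p + s) / 2); split.
  rewrite /p; move: ss; rewrite /D /p /r0 => ss; nra.
rewrite ler_pdivlMr //; rewrite /p; move: ss hL; rewrite /D /p /r0 => ss hL; nra.
Qed.

Lemma quad_root_le (R : realType) (A B K L : R) : (L + A) * (L - B) - K <= 0 ->
  exists mu, (mu + A) * (mu - B) = K /\ mu <= L.
Proof.
move=> hL.
pose p := A - B; pose r0 := - (A * B) - K.
pose D := p ^+ 2 - 4 * r0.
have DE : D = (2 * L + A - B) ^+ 2 - 4 * ((L + A) * (L - B) - K) by rewrite /D /p /r0; ring.
have D0 : 0 <= D by rewrite DE; have := sqr_ge0 (2 * L + A - B); lra.
pose s := Num.sqrt D.
have s0 : 0 <= s := sqrtr_ge0 D.
have ss : s ^+ 2 = D by rewrite sqr_sqrtr.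
exists ((- p - s) / 2); split.
  rewrite /p; move: ss; rewrite /D /p /r0 => ss; nra.
rewrite ler_pdivrMr //; rewrite /p; move: ss hL; rewrite /D /p /r0 => ss hL; nra.
Qed.


Lemma qroot_le (R : realType) (A B K L mu : R) : 0 < K -> 0 < L - B ->
  (L + A) * (L - B) = K -> (mu + A) * (mu - B) = K -> mu <= L.
Proof.
move=> K0 Y0 qL qm; rewrite leNgt; apply/negP => Hlt.
have X0 : 0 < L + A by nra.
have : (L + A) * (L - B) < (mu + A) * (mu - B).
  apply: (@lt_le_trans _ _ ((mu + A) * (L - B))); first by rewrite ltr_pM2r //; lra.
  rewrite ler_pM2l; lra.
by rewrite qL qm ltxx.
Qed.

Lemma qroot_ge (R : realType) (A B K L mu : R) : 0 < K -> L - B < 0 ->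
  (L + A) * (L - B) = K -> (mu + A) * (mu - B) = K -> L <= mu.
Proof.
move=> K0 Y0 qL qm; rewrite leNgt; apply/negP => Hlt.
have X0 : L + A < 0 by nra.
have : (L + A) * (L - B) < (mu + A) * (mu - B).
  rewrite -mulrNN -[(mu + A) * _]mulrNN.
  apply: (@lt_le_trans _ _ (- (mu + A) * - (L - B))); first by rewrite ltr_pM2r; lra.
  rewrite ler_pM2l; lra.
by rewrite qL qm ltxx.
Qed.

Lemma partA (R : realType) n (a b : R) : (2 < n)%N -> ~~ odd n -> b ^+ 2 = 1 ->
  a <= - (1 / 4) ->
  minlmax_at n a b (c_trans n a) (l_trans n a) /\
  eig_mult (mn n a b (c_trans n a)) (l_trans n a) = 2%N.
Proof.
move=> n2 ev b2 ha.
have N2 : (2 : R) < n%:R by rewrite ltr_nat.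
set N := n%:R in N2 *.
have a0 : a < 0 by lra.
have an0 : a != 0 by rewrite lt_eqF.
have Np1 : N + 1 != 0 by rewrite gt_eqF //; lra.
set c0 := c_trans n a; set L := l_trans n a.
have LE : L = c0 - 2 * a.
  by rewrite /L /c0 /l_trans /c_trans -/N; field; rewrite an0 Np1.
have qL : (L + N * c0) * (L - c0 - 2 * a) = N.
  by rewrite LE /c0 /c_trans -/N; field; rewrite an0 Np1.
have [r [eigP [rP multE]]] := @spec R n a b c0 n2 ev b2.
have Y1 : 1 <= L - c0 - 2 * a by rewrite LE; lra.
have X0 : 0 < L + N * c0 by nra.
split; last first.
  rewrite multE // LE eqxx mupNroot //; apply/negP => /rP [_ /(_ an0)].
  by rewrite -LE eqxx.
split.
  split; first by apply/eigP; left.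
  move=> mu /eigP [->|[qmu|rmu]]; first by rewrite LE.
    apply: (@qroot_le _ (N * c0) (c0 + 2 * a) N).
    - lra.
    - lra.
    - by rewrite opprD addrA.
    - by rewrite opprD addrA.
  have [+ _] := rP mu rmu; rewrite ler_norml (ltr0_norm a0) LE; lra.
move=> c l [_ Hl].
have [r' [eigP' _]] := @spec R n a b c n2 ev b2.
case: (lerP c0 c) => Hc.
  apply: le_trans (Hl (c - 2 * a) _); first by rewrite LE; lra.
  by apply/eigP'; left.
have qcL : (L + N * c) * (L - (c + 2 * a)) - N <= 0.
  pose X := L + N * c0; pose Y := L - c0 - 2 * a; pose d := c - c0.
  have -> : (L + N * c) * (L - (c + 2 * a)) - N =
            (X * Y - N) + d * (N * Y - X) - N * d ^+ 2 by rewrite /X /Y /d; ring.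
  have NYX : 0 <= N * Y - X.
    have XY : X * Y = N := qL.
    have Y1' : 1 <= Y := Y1.
    have : 0 <= Y * (N * Y - X).
      rewrite mulrBr (mulrC Y X) XY (_ : Y * (N * Y) - N = N * (Y * Y - 1)); last by ring.
      apply: mulr_ge0; nra.
    by rewrite pmulr_rge0 //; rewrite /Y; lra.
  rewrite qL subrr add0r.
  have : d * (N * Y - X) <= 0 by rewrite /d; nra.
  have := sqr_ge0 d; nra.
have [mu [qmu Lmu]] := @quad_root_ge _ _ _ _ _ qcL.
apply: le_trans Lmu (Hl mu _); apply/eigP'; right; left.
by rewrite -[RHS]qmu opprD addrA.
Qed.

Lemma partB (R : realType) n (a b : R) : (2 < n)%N -> ~~ odd n -> b ^+ 2 = 1 ->
  - (1 / 4) < a ->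
  minlmax_at n a b (c_low n a) (l_low n a) /\
  eig_mult (mn n a b (c_low n a)) (l_low n a) = 1%N.
Proof.
move=> n2 ev b2 ha.
have N2 : (2 : R) < n%:R by rewrite ltr_nat.
set N := n%:R in N2 *.
have Np1 : N + 1 != 0 by rewrite gt_eqF //; lra.
set c0 := c_low n a; set L := l_low n a.
have LY : L - c0 - 2 * a = 1.
  by rewrite /L /c0 /l_low /c_low -/N; field; rewrite Np1.
have LX : L + N * c0 = N.
  by rewrite /L /c0 /l_low /c_low -/N; field; rewrite Np1.
have qL : (L + N * c0) * (L - c0 - 2 * a) = N by rewrite LX LY mulr1.
have Ha : 2 * `|a| < L - c0.
  by case: (lerP 0 a) => h; [rewrite ger0_norm // | rewrite ltr0_norm //]; lra.
have [r [eigP [rP multE]]] := @spec R n a b c0 n2 ev b2.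
split; last first.
  rewrite multE // (_ : (c0 - 2 * a == L) = false); last by apply/negP => /eqP; lra.
  rewrite mupNroot //; apply/negP => /rP [+ _]; rewrite ler_norml; lra.
split.
  split; first by apply/eigP; right; left.
  move=> mu /eigP [->|[qmu|rmu]]; first by lra.
    apply: (@qroot_le _ (N * c0) (c0 + 2 * a) N).
    - lra.
    - lra.
    - by rewrite opprD addrA.
    - by rewrite opprD addrA.
  have [+ _] := rP mu rmu; rewrite ler_norml; lra.
move=> c l [_ Hl].
have [r' [eigP' _]] := @spec R n a b c n2 ev b2.
have qcL : (L + N * c) * (L - (c + 2 * a)) - N <= 0.
  have -> : (L + N * c) * (L - (c + 2 * a)) - N =
     (L + N * c0 + N * (c - c0)) * (L - c0 - 2 * a - (c - c0)) - N by ring.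
  rewrite LX LY (_ : (N + N * (c - c0)) * (1 - (c - c0)) - N = - (N * (c - c0) ^+ 2));
    last by ring.
  rewrite oppr_le0; apply: mulr_ge0; [lra | exact: sqr_ge0].
have [mu [qmu Lmu]] := @quad_root_ge _ _ _ _ _ qcL.
apply: le_trans Lmu (Hl mu _); apply/eigP'; right; left.
by rewrite -[RHS]qmu opprD addrA.
Qed.

Lemma partC (R : realType) n (a b : R) : (2 < n)%N -> ~~ odd n -> b ^+ 2 = 1 ->
  1 / 4 <= a ->
  maxlmin_at n a b (c_trans n a) (l_trans n a) /\
  eig_mult (mn n a b (c_trans n a)) (l_trans n a) = 2%N.
Proof.
move=> n2 ev b2 ha.
have N2 : (2 : R) < n%:R by rewrite ltr_nat.
set N := n%:R in N2 *.
have a0 : 0 < a by lra.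
have an0 : a != 0 by rewrite gt_eqF.
have Np1 : N + 1 != 0 by rewrite gt_eqF //; lra.
set c0 := c_trans n a; set L := l_trans n a.
have LE : L = c0 - 2 * a.
  by rewrite /L /c0 /l_trans /c_trans -/N; field; rewrite an0 Np1.
have qL : (L + N * c0) * (L - c0 - 2 * a) = N.
  by rewrite LE /c0 /c_trans -/N; field; rewrite an0 Np1.
have [r [eigP [rP multE]]] := @spec R n a b c0 n2 ev b2.
have Y1 : L - c0 - 2 * a <= -1 by rewrite LE; lra.
have X0 : L + N * c0 < 0 by nra.
split; last first.
  rewrite multE // LE eqxx mupNroot //; apply/negP => /rP [_ /(_ an0)].
  by rewrite -LE eqxx.
split.
  split; first by apply/eigP; left.
  move=> mu /eigP [->|[qmu|rmu]]; first by rewrite LE.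
    apply: (@qroot_ge _ (N * c0) (c0 + 2 * a) N).
    - lra.
    - lra.
    - by rewrite opprD addrA.
    - by rewrite opprD addrA.
  have [+ _] := rP mu rmu; rewrite ler_norml (gtr0_norm a0) LE; lra.
move=> c l [_ Hl].
have [r' [eigP' _]] := @spec R n a b c n2 ev b2.
case: (lerP c c0) => Hc.
  apply: le_trans (Hl (c - 2 * a) _) _; last by rewrite LE; lra.
  by apply/eigP'; left.
have qcL : (L + N * c) * (L - (c + 2 * a)) - N <= 0.
  pose X := L + N * c0; pose Y := L - c0 - 2 * a; pose d := c - c0.
  have -> : (L + N * c) * (L - (c + 2 * a)) - N =
            (X * Y - N) + d * (N * Y - X) - N * d ^+ 2 by rewrite /X /Y /d; ring.
  have NYX : N * Y - X <= 0.
    have XY : X * Y = N := qL.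
    have Y1' : Y <= -1 := Y1.
    have : 0 <= Y * (N * Y - X).
      rewrite mulrBr (mulrC Y X) XY (_ : Y * (N * Y) - N = N * (Y * Y - 1)); last by ring.
      apply: mulr_ge0; nra.
    by rewrite nmulr_rge0 //; lra.
  rewrite qL subrr add0r.
  have : d * (N * Y - X) <= 0 by rewrite /d; nra.
  have := sqr_ge0 d; nra.
have [mu [qmu Lmu]] := @quad_root_le _ _ _ _ _ qcL.
apply: le_trans (Hl mu _) Lmu; apply/eigP'; right; left.
by rewrite -[RHS]qmu opprD addrA.
Qed.

Lemma partD (R : realType) n (a b : R) : (2 < n)%N -> ~~ odd n -> b ^+ 2 = 1 ->
  a < 1 / 4 ->
  maxlmin_at n a b (c_upp n a) (l_upp n a) /\
  eig_mult (mn n a b (c_upp n a)) (l_upp n a) = 1%N.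
Proof.
move=> n2 ev b2 ha.
have N2 : (2 : R) < n%:R by rewrite ltr_nat.
set N := n%:R in N2 *.
have Np1 : N + 1 != 0 by rewrite gt_eqF //; lra.
set c0 := c_upp n a; set L := l_upp n a.
have LY : L - c0 - 2 * a = -1.
  by rewrite /L /c0 /l_upp /c_upp -/N; field; rewrite Np1.
have LX : L + N * c0 = - N.
  by rewrite /L /c0 /l_upp /c_upp -/N; field; rewrite Np1.
have qL : (L + N * c0) * (L - c0 - 2 * a) = N by rewrite LX LY mulrNN mulr1.
have Ha : 2 * `|a| < c0 - L.
  by case: (lerP 0 a) => h; [rewrite ger0_norm // | rewrite ltr0_norm //]; lra.
have [r [eigP [rP multE]]] := @spec R n a b c0 n2 ev b2.
split; last first.
  rewrite multE // (_ : (c0 - 2 * a == L) = false); last by apply/negP => /eqP; lra.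
  rewrite mupNroot //; apply/negP => /rP [+ _]; rewrite ler_norml; lra.
split.
  split; first by apply/eigP; right; left.
  move=> mu /eigP [->|[qmu|rmu]]; first by lra.
    apply: (@qroot_ge _ (N * c0) (c0 + 2 * a) N).
    - lra.
    - lra.
    - by rewrite opprD addrA.
    - by rewrite opprD addrA.
  have [+ _] := rP mu rmu; rewrite ler_norml; lra.
move=> c l [_ Hl].
have [r' [eigP' _]] := @spec R n a b c n2 ev b2.
have qcL : (L + N * c) * (L - (c + 2 * a)) - N <= 0.
  have -> : (L + N * c) * (L - (c + 2 * a)) - N =
     (L + N * c0 + N * (c - c0)) * (L - c0 - 2 * a - (c - c0)) - N by ring.
  rewrite LX LY (_ : (- N + N * (c - c0)) * (-1 - (c - c0)) - N = - (N * (c - c0) ^+ 2));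
    last by ring.
  rewrite oppr_le0; apply: mulr_ge0; [lra | exact: sqr_ge0].
have [mu [qmu Lmu]] := @quad_root_le _ _ _ _ _ qcL.
apply: le_trans (Hl mu _) Lmu; apply/eigP'; right; left.
by rewrite -[RHS]qmu opprD addrA.
Qed.


Theorem corollary5 (R : realType) (n : nat) (a b : R) :
  (2 < n)%N -> ~~ odd n -> (b = 1 \/ b = -1) ->
  (* min over c of lambda_max *)
  (a <= - (1 / 4) ->
     minlmax_at n a b (c_trans n a) (l_trans n a) /\
     eig_mult (mn n a b (c_trans n a)) (l_trans n a) = 2%N) /\
  (- (1 / 4) < a ->
     minlmax_at n a b (c_low n a) (l_low n a) /\
     eig_mult (mn n a b (c_low n a)) (l_low n a) = 1%N) /\
  (* max over c of lambda_min *)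
  (1 / 4 <= a ->
     maxlmin_at n a b (c_trans n a) (l_trans n a) /\
     eig_mult (mn n a b (c_trans n a)) (l_trans n a) = 2%N) /\
  (a < 1 / 4 ->
     maxlmin_at n a b (c_upp n a) (l_upp n a) /\
     eig_mult (mn n a b (c_upp n a)) (l_upp n a) = 1%N).
Proof.
move=> n2 ev hb.
have b2 : b ^+ 2 = 1 by case: hb => ->; rewrite ?sqrrN expr1n.
split; first by move=> h; exact: (@partA R n a b n2 ev b2 h).
split; first by move=> h; exact: (@partB R n a b n2 ev b2 h).
split; first by move=> h; exact: (@partC R n a b n2 ev b2 h).
by move=> h; exact: (@partD R n a b n2 ev b2 h).
Qed.
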